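(* In the setting of the context, assume (A2), (A2') and (A3). Then for every $j\in\{1,\dots,p\}$, $$\big|\,\|R\|_{\mathcal{G}_j,2}-\|\alpha\|_{\mathcal{G}_j,2}\big|^2\le 4M^2v_n\,r(\mathcal{G}_j)+2(1+\nu)\,\|P_{V_{\mathcal{G}_j}}W\|_2^2.$$
   Context: Model $Y=\tilde X\alpha+W$ with $\tilde X\in\mathbb{R}^{n\times k}$, $\alpha\in\mathbb{R}^k$, $W\in\mathbb{R}^n$ a noise vector with i.i.d. $\mathcal{N}(0,\sigma^2)$ entries. $\mathcal{G}_1,\dots,\mathcal{G}_p$ is a partition of $\{1,\dots,k\}$, $t_j=\#\mathcal{G}_j$, $t^*=\max_j t_j$; each index $\ell$ is written $\ell=(j,t)$ with $j$ its group and $t\in\{1,\dots,t_j\}$ its rank inside $\mathcal{G}_j$. $R_\ell=\sum_{i=1}^n Y_i\tilde X_{i\ell}$. Norms: $\|u\|_{\mathcal{I},1}=\sum_{\ell\in\mathcal{I}}|u_\ell|$, $\|u\|_{\mathcal{I},2}^2=\sum_{\ell\in\mathcal{I}}u_\ell^2$. $\Gamma=\tilde X^t\tilde X$; $V_{\mathcal{I}}$ is the span of the columns of $\tilde X$ indexed by $\mathcal{I}$ and $P_{V_{\mathcal{I}}}$ the orthogonal projection onto it. $\gamma_{BT}=\sup\{|\Gamma_{(j,t)(j',t')}|: t\neq t'\}$, $\gamma_{BG}=\sup\{|\Gamma_{(j,t)(j',t)}|: j\ne j'\}$; $r(\mathcal{I})=\#(\mathcal{I})\gamma_{BT}^2+\#\{j:\exists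 t,(j,t)\in\mathcal{I}\}\gamma_{BG}^2$; $\tau^*=t^*\gamma_{BT}+\gamma_{BG}$. Assumptions: (A2) $\Gamma_{\ell\ell}=1$ for all $\ell$; (A2') $\tau^*\le\nu$ for a fixed $\nu\in(0,1)$; (A3) there exist $q\in(0,1]$, $M>0$ and $v_n>0$ with $\sum_{j=1}^p\|\alpha\|_{\mathcal{G}_j,1}^q\le M^q v_n^{q/2}$. *)

(* Defs.v *)
From HB Require Import structures.
From mathcomp Require Import all_boot all_order all_algebra.
From mathcomp Require Import all_classical all_reals.
From mathcomp Require Import exp.
Set Implicit Arguments. Unset Strict Implicit. Unset Printing Implicit Defensive.
Import Order.TTheory GRing.Theory Num.Theory.
Local Open Scope ring_scope.

Section Defs.
Variables (R : realType) (n k p : nat).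

Definition grp (g : 'I_k -> 'I_p) (j : 'I_p) : {set 'I_k} := [set l | g l == j].

Definition tstar (g : 'I_k -> 'I_p) : nat := \max_(j : 'I_p) #|grp g j|.

Definition Gram (X : 'M[R]_(n, k)) : 'M[R]_k := X^T *m X.

(* gamma_BT = sup{|Gamma_(j,t)(j',t')| : t <> t'} (0 if the set is empty) *)
Definition gammaBT (X : 'M[R]_(n, k)) (rk : 'I_k -> nat) : R :=
  \big[Num.max/0]_(l : 'I_k) \big[Num.max/0]_(l' : 'I_k | rk l != rk l')
     `|Gram X l l'|.

(* gamma_BG = sup{|Gamma_(j,t)(j',t)| : j <> j'} (0 if the set is empty) *)
Definition gammaBG (X : 'M[R]_(n, k)) (g : 'I_k -> 'I_p) (rk : 'I_k -> nat) : R :=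
  \big[Num.max/0]_(l : 'I_k) \big[Num.max/0]_(l' : 'I_k | (rk l == rk l') && (g l != g l'))
     `|Gram X l l'|.

Definition rI (X : 'M[R]_(n, k)) (g : 'I_k -> 'I_p) (rk : 'I_k -> nat)
    (I : {set 'I_k}) : R :=
  (#|I|%:R * gammaBT X rk ^+ 2 + #|[set j | [exists l in I, g l == j]]|%:R * gammaBG X g rk ^+ 2).

Definition norm1I (u : 'cV[R]_k) (I : {set 'I_k}) : R := \sum_(l in I) `|u l 0|.
Definition norm2I (u : 'cV[R]_k) (I : {set 'I_k}) : R := Num.sqrt (\sum_(l in I) u l 0 ^+ 2).

Definition sqnorm (w : 'cV[R]_n) : R := \sum_(i < n) w i 0 ^+ 2.

(* matrix whose row space is V_I = span of the columns of X indexed by I *)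
Definition colsI (X : 'M[R]_(n, k)) (I : {set 'I_k}) : 'M[R]_(k, n) :=
  \matrix_(l < k) (if l \in I then (col l X)^T else 0).

Definition is_orth_proj (X : 'M[R]_(n, k)) (I : {set 'I_k}) (w pw : 'cV[R]_n) : Prop :=
  (pw^T <= colsI X I)%MS /\
  forall v : 'rV[R]_n, (v <= colsI X I)%MS -> v *m (w - pw) = 0.

Definition Rstat (X : 'M[R]_(n, k)) (Y : 'cV[R]_n) : 'cV[R]_k := X^T *m Y.

End Defs.

(* Main.v *)
Require Import Defs.
From HB Require Import structures.
From mathcomp Require Import all_boot all_order all_algebra.
From mathcomp Require Import all_classical all_reals.
From mathcomp Require Import exp.
From mathcomp Require Import ring lra.
Import Order.TTheory GRing.Theory Num.Theory.
Local Open Scope ring_scope.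

Section Aux.
Context {R : realType}.

Lemma CS (I : finType) (P : pred I) (a b : I -> R) :
  (\sum_(i | P i) a i * b i) ^+ 2 <=
  (\sum_(i | P i) a i ^+ 2) * (\sum_(i | P i) b i ^+ 2).
Proof.
set A := \sum_(i | P i) a i ^+ 2.
set B := \sum_(i | P i) a i * b i.
set C := \sum_(i | P i) b i ^+ 2.
have A0 : 0 <= A by apply: sumr_ge0 => i _; exact: sqr_ge0.
have C0 : 0 <= C by apply: sumr_ge0 => i _; exact: sqr_ge0.
have [Az|Anz] := eqVneq A 0.
  have a0 : forall i, P i -> a i = 0.
    move=> i Pi; apply/eqP; rewrite -sqrf_eq0; apply/eqP.
    by move: i Pi; apply/psumr_eq0P => // i _; exact: sqr_ge0.
  have -> : B = 0 by rewrite /B big1 // => i Pi; rewrite a0 // mul0r.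
  by rewrite expr0n /= mulr_ge0.
have Apos : 0 < A by rewrite lt_neqAle eq_sym Anz A0.
have E : \sum_(i | P i) (A * b i - B * a i) ^+ 2 = A * (A * C - B ^+ 2).
  rewrite (eq_bigr (fun i => A ^+ 2 * b i ^+ 2 + (- (2 * A * B)) * (a i * b i)
             + B ^+ 2 * a i ^+ 2)); last by move=> i _; ring.
  rewrite !big_split /= -!mulr_sumr -/A -/B -/C; ring.
have : 0 <= A * (A * C - B ^+ 2).
  by rewrite -E; apply: sumr_ge0 => i _; exact: sqr_ge0.
by rewrite pmulr_rge0 // subr_ge0.
Qed.

Lemma sqrt_diff (A B C : R) : 0 <= A -> 0 <= C -> B ^+ 2 <= A * C ->
  `|Num.sqrt A - Num.sqrt C| ^+ 2 <= A + C - 2 * B.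
Proof.
move=> A0 C0 h.
rewrite real_normK ?num_real //.
have a2 := sqr_sqrtr A0; have c2 := sqr_sqrtr C0.
have a0 := sqrtr_ge0 A; have c0 := sqrtr_ge0 C.
set a := Num.sqrt A in a2 a0 *; set c := Num.sqrt C in c2 c0 *.
rewrite -a2 -c2 in h *.
have hB : B <= a * c.
  have ac0 : 0 <= a * c by rewrite mulr_ge0.
  nra.
nra.
Qed.

Lemma normdiff k (u v : 'cV[R]_k) (G : {set 'I_k}) :
  `|norm2I u G - norm2I v G| ^+ 2 <= \sum_(l in G) (u l 0 - v l 0) ^+ 2.
Proof.
rewrite /norm2I.
have -> : \sum_(l in G) (u l 0 - v l 0) ^+ 2 =
   \sum_(l in G) u l 0 ^+ 2 + \sum_(l in G) v l 0 ^+ 2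
   - 2 * \sum_(l in G) u l 0 * v l 0.
  rewrite mulr_sumr -big_split -sumrB /=; apply: eq_bigr => i _; ring.
apply: sqrt_diff; try (by apply: sumr_ge0 => i _; exact: sqr_ge0).
exact: CS.
Qed.

Lemma sumsq_le (I : finType) (P : pred I) (b : I -> R) :
  (forall i, P i -> 0 <= b i) ->
  \sum_(i | P i) b i ^+ 2 <= (\sum_(i | P i) b i) ^+ 2.
Proof.
move=> b0; rewrite expr2 mulr_suml; apply: ler_sum => i Pi.
rewrite expr2; apply: ler_wpM2l; first exact: b0.
by rewrite (bigD1 i) //= lerDl; apply: sumr_ge0 => j /andP[Pj _]; exact: b0.
Qed.

Lemma le_bigmaxR (I : eqType) (r : seq I) (P : pred I) (F : I -> R) i :
  i \in r -> P i -> F i <= \big[Num.max/0]_(j <- r | P j) F j.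
Proof.
elim: r => // x r IH; rewrite inE big_cons => /orP[/eqP <-|ir] Pi.
  by rewrite Pi le_max lexx.
case: (P x); last exact: IH.
by rewrite le_max IH ?orbT.
Qed.

Lemma bigmaxR_ge0 (I : Type) (r : seq I) (P : pred I) (F : I -> R) :
  0 <= \big[Num.max/0]_(j <- r | P j) F j.
Proof.
elim/big_rec: _ => // i x _ hx; by rewrite le_max hx orbT.
Qed.

Lemma powR_subadd {a b q : R} : 0 <= a -> 0 <= b -> 0 < q -> q <= 1 ->
  powR (a + b) q <= powR a q + powR b q.
Proof.
move=> a0 b0 q0 q1.
have [c0|] := eqVneq (a + b) 0.
  by rewrite c0 powR0 ?gt_eqF // addr_ge0 // powR_ge0.
move=> cnz.
have cp : 0 < a + b by rewrite lt_neqAle eq_sym cnz addr_ge0.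
have key : forall x, 0 <= x -> x <= a + b ->
    powR (a + b) q * (x / (a + b)) <= powR x q.
  move=> x x0 xc.
  have -> : powR x q = powR (a + b) q * powR (x / (a + b)) q.
    by rewrite -powRM ?(ltW cp) ?divr_ge0 ?(ltW cp) // mulrC divfK.
  apply: ler_wpM2l; first exact: powR_ge0.
  have [->|xnz] := eqVneq x 0; first by rewrite mul0r powR_ge0.
  apply: ger1_powR => //; rewrite divr_gt0 ?cp ?ler_pdivrMr ?mul1r //.
  by rewrite lt_neqAle eq_sym xnz.
have kb : powR (a + b) q * (b / (a + b)) <= powR b q.
  by apply: key => //; rewrite lerDr.
have ka' : powR (a + b) q * (a / (a + b)) <= powR a q.
  by apply: key => //; rewrite lerDl.
apply: le_trans (lerD ka' kb).
by rewrite -mulrDr -mulrDl divff // mulr1.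
Qed.

Lemma powR_sum {I : finType} {P : pred I} {a : I -> R} {q : R} :
  (forall i, P i -> 0 <= a i) -> 0 < q -> q <= 1 ->
  powR (\sum_(i | P i) a i) q <= \sum_(i | P i) powR (a i) q.
Proof.
move=> a0 q0 q1.
pose K (x y : R) := 0 <= x /\ powR x q <= y.
suff [] : K (\sum_(i | P i) a i) (\sum_(i | P i) powR (a i) q) by [].
apply: (big_ind2 K).
- by split => //; rewrite powR0 ?gt_eqF.
- move=> x1 x2 y1 y2 [h1 h2] [h3 h4]; split; first exact: addr_ge0.
  exact: le_trans (powR_subadd h1 h3 q0 q1) (lerD h2 h4).
- by move=> i Pi; split; [exact: a0 | exact: lexx].
Qed.


Lemma GramE n k (X : 'M[R]_(n, k)) l l' : Gram X l l' = \sum_i X i l * X i l'.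
Proof. by rewrite /Gram mxE; apply: eq_bigr => i _; rewrite mxE. Qed.

Lemma gersh n k (X : 'M[R]_(n, k)) (G : {set 'I_k}) (u : 'I_n -> R) (gam nu : R) :
  (forall l, Gram X l l = 1) ->
  (forall l l', l \in G -> l' \in G -> l != l' -> `|Gram X l l'| <= gam) ->
  0 <= gam -> #|G|%:R * gam <= nu ->
  \sum_(l in G) (\sum_i X i l * u i) ^+ 2 <= (1 + nu) * \sum_i u i ^+ 2.
Proof.
move=> Hd Ho g0 Hnu.
set s := fun l => \sum_i X i l * u i.
set T := \sum_(l in G) s l ^+ 2.
set z := fun i => \sum_(l in G) s l * X i l.
have T0 : 0 <= T by apply: sumr_ge0 => i _; exact: sqr_ge0.
have U0 : 0 <= \sum_i u i ^+ 2 by apply: sumr_ge0 => i _; exact: sqr_ge0.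
have TE : T = \sum_i z i * u i.
  rewrite /T /z.
  under eq_bigr do rewrite expr2 {2}/s mulr_sumr.
  rewrite exchange_big /=; apply: eq_bigr => i _.
  by rewrite mulr_suml; apply: eq_bigr => l _; rewrite mulrA.
have ZE : \sum_i z i ^+ 2 =
    \sum_(l in G) \sum_(l' in G) s l * s l' * Gram X l l'.
  rewrite /z.
  under eq_bigr do rewrite expr2 mulr_suml.
  under eq_bigr do under eq_bigr do rewrite mulr_sumr.
  rewrite exchange_big /=; apply: eq_bigr => l _.
  rewrite exchange_big /=; apply: eq_bigr => l' _.
  rewrite GramE mulr_sumr; apply: eq_bigr => i _; ring.
have ZB : \sum_i z i ^+ 2 <= (1 + nu) * T.
  rewrite ZE.
  apply: (@le_trans _ _ (\sum_(l in G) \sum_(l' in G)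
     ((l == l')%:R * s l ^+ 2 + gam / 2 * (s l ^+ 2 + s l' ^+ 2)))).
    apply: ler_sum => l lG; apply: ler_sum => l' l'G.
    have [<-|nll] := eqVneq l l'.
      rewrite Hd mulr1 mul1r -expr2.
      have : 0 <= gam / 2 * (s l ^+ 2 + s l ^+ 2).
        by rewrite mulr_ge0 ?divr_ge0 ?addr_ge0 ?sqr_ge0.
      lra.
    rewrite mul0r add0r.
    have h := Ho l l' lG l'G nll.
    have h2 : s l * s l' * Gram X l l' <= `|s l * s l'| * gam.
      apply: le_trans (ler_norm _) _; rewrite normrM.
      by apply: ler_wpM2l => //; rewrite normr_ge0.
    apply: le_trans h2 _.
    have h3 : 2 * `|s l * s l'| <= s l ^+ 2 + s l' ^+ 2.
      rewrite normrM -[s l ^+ 2]real_normK ?num_real // -[s l' ^+ 2]real_normK ?num_real //.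
      have := sqr_ge0 (`|s l| - `|s l'|); lra.
    have := normr_ge0 (s l * s l'); nra.
  have -> : \sum_(l in G) \sum_(l' in G)
      ((l == l')%:R * s l ^+ 2 + gam / 2 * (s l ^+ 2 + s l' ^+ 2))
      = T + gam * #|G|%:R * T.
    under eq_bigr do rewrite big_split /=.
    rewrite big_split /=.
    congr (_ + _).
      apply: eq_bigr => l lG; rewrite (bigD1 l) //= eqxx mul1r big1 ?addr0 //.
      by move=> l' /andP[_ nl]; rewrite eq_sym (negbTE nl) mul0r.
    under eq_bigr do rewrite -mulr_sumr big_split /= sumr_const.
    rewrite -mulr_sumr big_split /= sumr_const -/T.
    have -> : \sum_(i in G) (s i ^+ 2 *+ #|G|) = T *+ #|G|.
      by rewrite /T -sumrMnl.
    by rewrite -[T *+ _]mulr_natr; field.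
  have : gam * #|G|%:R * T <= nu * T.
    by apply: ler_wpM2r => //; rewrite mulrC.
  lra.
have CSz := @CS _ predT z u.
rewrite -TE in CSz.
have [T00|Tnz] := eqVneq T 0.
  rewrite T00; apply: mulr_ge0 => //; apply: addr_ge0 => //.
  by apply: le_trans Hnu; apply: mulr_ge0.
have Tp : 0 < T by rewrite lt_neqAle eq_sym Tnz T0.
have : T ^+ 2 <= (1 + nu) * T * \sum_i u i ^+ 2.
  apply: le_trans CSz _; exact: ler_wpM2r.
rewrite expr2 => h; nra.
Qed.


Lemma S_bound k p (alpha : 'cV[R]_k) (g : 'I_k -> 'I_p) (q M vn : R) :
  0 < q -> q <= 1 -> 0 < M -> 0 < vn ->
  \sum_(j < p) powR (norm1I alpha (grp g j)) q <= powR M q * powR vn (q / 2) ->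
  (\sum_l `|alpha l 0|) ^+ 2 <= M ^+ 2 * vn.
Proof.
move=> q0 q1 M0 vn0 A3.
set S := \sum_l `|alpha l 0|.
have S0 : 0 <= S by apply: sumr_ge0 => l _; exact: normr_ge0.
have SE : S = \sum_(j < p) norm1I alpha (grp g j).
  rewrite /S (partition_big g xpredT) //=; apply: eq_bigr => j _.
  by rewrite /norm1I; apply: eq_bigl => l; rewrite inE.
have h1 : powR S q <= powR (M * Num.sqrt vn) q.
  rewrite SE; apply: le_trans (powR_sum _ q0 q1) _.
    by move=> j _; apply: sumr_ge0 => l _; exact: normr_ge0.
  apply: le_trans A3 _.
  rewrite powRM ?(ltW M0) ?sqrtr_ge0 // -powR12_sqrt ?(ltW vn0) // -powRrM.
  by rewrite [2^-1 * q]mulrC.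
have h2 : S <= M * Num.sqrt vn.
  rewrite leNgt; apply/negP => lt.
  have := gt0_ltr_powR q0 _ _ lt.
  rewrite !nnegrE S0 mulr_ge0 ?(ltW M0) ?sqrtr_ge0 // => /(_ isT isT).
  by rewrite ltNge h1.
have : S ^+ 2 <= (M * Num.sqrt vn) ^+ 2.
  by rewrite ler_sqr // ?nnegrE // mulr_ge0 ?(ltW M0) ?sqrtr_ge0.
by rewrite exprMn sqr_sqrtr // ltW.
Qed.


Lemma e_bound n k p (X : 'M[R]_(n, k)) (alpha : 'cV[R]_k) (g : 'I_k -> 'I_p)
    (rk : 'I_k -> nat) (j : 'I_p) (gT gG : R) :
  (forall l l', g l = g l' -> rk l = rk l' -> l = l') ->
  (forall l, Gram X l l = 1) ->
  (forall l l', rk l != rk l' -> `|Gram X l l'| <= gT) ->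
  (forall l l', rk l == rk l' -> g l != g l' -> `|Gram X l l'| <= gG) ->
  0 <= gT -> 0 <= gG ->
  \sum_(l in grp g j) ((Gram X *m alpha) l 0 - alpha l 0) ^+ 2 <=
    2 * (\sum_l `|alpha l 0|) ^+ 2 * (#|grp g j|%:R * gT ^+ 2 + gG ^+ 2).
Proof.
move=> rk_inj Hd HBT HBG gT0 gG0.
set S := \sum_l `|alpha l 0|.
set G := grp g j.
have S0 : 0 <= S by apply: sumr_ge0 => l _; exact: normr_ge0.
pose b l := \sum_l' (rk l' == rk l)%:R * `|alpha l' 0|.
have b0 : forall l, 0 <= b l.
  by move=> l; apply: sumr_ge0 => l' _; rewrite mulr_ge0 ?ler0n ?normr_ge0.
have eE : forall l, (Gram X *m alpha) l 0 - alpha l 0 =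
    \sum_(l' | l' != l) Gram X l l' * alpha l' 0.
  move=> l; rewrite mxE (bigD1 l) //= Hd mul1r; ring.
have eB : forall l, `|(Gram X *m alpha) l 0 - alpha l 0| <= gT * S + gG * b l.
  move=> l; rewrite eE; apply: le_trans (ler_norm_sum _ _ _) _.
  apply: (@le_trans _ _ (\sum_(l' | l' != l) (gT + (rk l' == rk l)%:R * gG) * `|alpha l' 0|)).
    apply: ler_sum => l' nl; rewrite normrM; apply: ler_wpM2r; first exact: normr_ge0.
    have [e|ne] := eqVneq (rk l') (rk l).
      rewrite mul1r; apply: le_trans (HBG l l' _ _) _.
      - by rewrite e.
      - apply/negP => /eqP e2; move/negP: nl; apply; apply/eqP.
        exact: rk_inj.
      - by rewrite lerDr.
    by rewrite mul0r addr0 HBT // eq_sym.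
  apply: (@le_trans _ _ (\sum_l' (gT + (rk l' == rk l)%:R * gG) * `|alpha l' 0|)).
    rewrite [X in _ <= X](bigD1 l) //= lerDr; apply: mulr_ge0; last exact: normr_ge0.
    by rewrite addr_ge0 // mulr_ge0 ?ler0n.
  rewrite /S /b !mulr_sumr -big_split /=; apply: ler_sum => l' _; rewrite le_eqVlt; apply/orP; left; apply/eqP; ring.
have e2 : forall l, ((Gram X *m alpha) l 0 - alpha l 0) ^+ 2 <=
    2 * gT ^+ 2 * S ^+ 2 + 2 * gG ^+ 2 * b l ^+ 2.
  move=> l; have h := eB l.
  set e := (Gram X *m alpha) l 0 - alpha l 0 in h *.
  rewrite -real_normK ?num_real //.
  have hb := b0 l; have he := normr_ge0 e.
  have hA : 0 <= gT * S + gG * b l by rewrite addr_ge0 // mulr_ge0.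
  have : `|e| ^+ 2 <= (gT * S + gG * b l) ^+ 2 by rewrite ler_sqr ?nnegrE.
  have := sqr_ge0 (gT * S - gG * b l).
  nra.
have cnt : forall l', \sum_(l in G) (rk l' == rk l)%:R <= 1 :> R.
  move=> l'.
  case: (pickP [pred l0 | (l0 \in G) && (rk l' == rk l0)]) => [l0 /andP[l0G e0]|none].
    rewrite (bigD1 l0) //= e0 big1 ?addr0 //.
    move=> l /andP[lG nl]; case he: (rk l' == rk l) => //.
    exfalso; move/negP: nl; apply; apply/eqP; apply: rk_inj.
      by move: lG l0G; rewrite !inE => /eqP -> /eqP ->.
    by move/eqP: he => <-; move/eqP: e0.
  rewrite big1 ?ler01 // => l lG.
  by move: (none l); rewrite /= lG /= => ->.
have sb : \sum_(l in G) b l <= S.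
  rewrite /b exchange_big /=; apply: ler_sum => l' _.
  rewrite -mulr_suml; rewrite -[X in _ <= X]mul1r.
  by apply: ler_wpM2r; [exact: normr_ge0 | exact: cnt].
have sb2 : \sum_(l in G) b l ^+ 2 <= S ^+ 2.
  apply: le_trans; first by apply: sumsq_le => l _; exact: b0.
  rewrite ler_sqr ?nnegrE //; apply: sumr_ge0 => l _; exact: b0.
apply: le_trans (ler_sum _ (fun l _ => e2 l)) _.
rewrite big_split /= sumr_const -mulr_sumr.
rewrite -mulr_natr.
have : 0 <= gG ^+ 2 by exact: sqr_ge0.
nra.
Qed.


End Aux.

Theorem proposition1 (R : realType) (n k p : nat)
    (X : 'M[R]_(n, k)) (alpha : 'cV[R]_k) (W : 'cV[R]_n)
    (g : 'I_k -> 'I_p) (rk : 'I_k -> nat)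
    (g_surj : forall j : 'I_p, exists l : 'I_k, g l = j)
    (rk_range : forall l : 'I_k, (1 <= rk l <= #|grp g (g l)|)%N)
    (rk_inj : forall l l' : 'I_k, g l = g l' -> rk l = rk l' -> l = l')
    (nu q M vn : R)
    (A2 : forall l : 'I_k, Gram X l l = 1)
    (nu_pos : 0 < nu) (nu_lt1 : nu < 1)
    (A2' : (tstar g)%:R * gammaBT X rk + gammaBG X g rk <= nu)
    (q_pos : 0 < q) (q_le1 : q <= 1) (M_pos : 0 < M) (vn_pos : 0 < vn)
    (A3 : \sum_(j < p) powR (norm1I alpha (grp g j)) q
            <= powR M q * powR vn (q / 2)) :
  forall (j : 'I_p) (PW : 'cV[R]_n),
    is_orth_proj X (grp g j) W PW ->
    `|norm2I (Rstat X (X *m alpha + W)) (grp g j) - norm2I alpha (grp g j)| ^+ 2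
      <= 4 * M ^+ 2 * vn * rI X g rk (grp g j) + 2 * (1 + nu) * sqnorm PW.
Proof.
move=> j PW [Hsub Horth].
set G := grp g j.
set gT := gammaBT X rk.
set gG := gammaBG X g rk.
have gT0 : 0 <= gT by apply: bigmaxR_ge0.
have gG0 : 0 <= gG by apply: bigmaxR_ge0.
have HBT : forall l l', rk l != rk l' -> `|Gram X l l'| <= gT.
  move=> l l' ne; rewrite /gT /gammaBT.
  apply: le_trans; last first.
    exact: (@le_bigmaxR R _ (index_enum 'I_k) xpredT (fun l => \big[Num.max/0]_(l' : 'I_k | rk l != rk l') `|Gram X l l'|) l (mem_index_enum l) isT).
  exact: (@le_bigmaxR R _ (index_enum 'I_k) (fun l' => rk l != rk l') (fun l' => `|Gram X l l'|) l' (mem_index_enum l') ne).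
have HBG : forall l l', rk l == rk l' -> g l != g l' -> `|Gram X l l'| <= gG.
  move=> l l' e ne; rewrite /gG /gammaBG.
  apply: le_trans; last first.
    exact: (@le_bigmaxR R _ (index_enum 'I_k) xpredT (fun l => \big[Num.max/0]_(l' : 'I_k | (rk l == rk l') && (g l != g l')) `|Gram X l l'|) l (mem_index_enum l) isT).
  exact: (@le_bigmaxR R _ (index_enum 'I_k) (fun l' => (rk l == rk l') && (g l != g l')) (fun l' => `|Gram X l l'|) l' (mem_index_enum l') (introT andP (conj e ne))).
have HGnu : #|G|%:R * gT <= nu.
  have tG : (#|G| <= tstar g)%N by rewrite /tstar; exact: (@leq_bigmax _ (fun j0 => #|grp g j0|) j).
  have : #|G|%:R * gT <= (tstar g)%:R * gT by apply: ler_wpM2r => //; rewrite ler_nat.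
  move: A2'; rewrite -/gT -/gG; lra.
set S := \sum_l `|alpha l 0|.
have SB : S ^+ 2 <= M ^+ 2 * vn by exact: (@S_bound R k p alpha g q M vn q_pos q_le1 M_pos vn_pos A3).
have EB := @e_bound R n k p X alpha g rk j gT gG rk_inj A2 HBT HBG gT0 gG0.
rewrite -/S -/G in EB.
pose e l := (Gram X *m alpha) l 0 - alpha l 0.
pose w l := (X^T *m W) l 0.
have RvE : forall l, Rstat X (X *m alpha + W) l 0 - alpha l 0 = e l + w l.
  move=> l; rewrite /Rstat mulmxDr mulmxA /e /w /Gram mxE; ring.
have wE : forall l, l \in G -> w l = \sum_i X i l * PW i 0.
  move=> l lG.
  have Hv : ((col l X)^T <= colsI X G)%MS.
    have <- : row l (colsI X G) = (col l X)^T by rewrite /colsI rowK lG.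
    exact: row_sub.
  have := Horth _ Hv.
  move/(congr1 (fun A : 'M[R]_(1, 1) => A 0 0)).
  rewrite mxE [RHS]mxE => h.
  apply/eqP; rewrite -subr_eq0; apply/eqP; rewrite -[RHS]h.
  rewrite /w mxE -sumrB; apply: eq_bigr => i _; rewrite !mxE; ring.
have WB : \sum_(l in G) w l ^+ 2 <= (1 + nu) * sqnorm PW.
  rewrite (eq_bigr (fun l => (\sum_i X i l * PW i 0) ^+ 2)); last first.
    by move=> l lG; rewrite wE.
  apply: (@gersh R n k X G _ gT nu) => //.
  move=> l l' lG l'G nl; apply: HBT; apply/negP => /eqP e0.
  move/negP: nl; apply; apply/eqP; apply: rk_inj => //.
  by move: lG l'G; rewrite !inE => /eqP -> /eqP ->.
have cnt : 1 <= #|[set j0 | [exists l in G, g l == j0]]|%:R :> R.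
  rewrite ler1n; apply/card_gt0P; exists j; rewrite inE.
  have [l0 hl0] := g_surj j.
  by apply/existsP; exists l0; rewrite /G inE hl0 eqxx.
have rIE : rI X g rk G = #|G|%:R * gT ^+ 2
     + #|[set j0 | [exists l in G, g l == j0]]|%:R * gG ^+ 2 by [].
apply: le_trans; first exact: normdiff.
under eq_bigr do rewrite RvE.
apply: (@le_trans _ _ (\sum_(l in G) (2 * e l ^+ 2 + 2 * w l ^+ 2))).
  apply: ler_sum => l _; have := sqr_ge0 (e l - w l); nra.
rewrite big_split /= -!mulr_sumr.
have h1 : 2 * S ^+ 2 * (#|G|%:R * gT ^+ 2 + gG ^+ 2) <= 2 * (M ^+ 2 * vn) * rI X g rk G.
  rewrite rIE.
  have hr : #|G|%:R * gT ^+ 2 + gG ^+ 2 <= #|G|%:R * gT ^+ 2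
     + #|[set j0 | [exists l in G, g l == j0]]|%:R * gG ^+ 2.
    rewrite lerD2l -[X in X <= _]mul1r; apply: ler_wpM2r => //; exact: sqr_ge0.
  have A0 : 0 <= #|G|%:R * gT ^+ 2 + gG ^+ 2.
    by rewrite addr_ge0 ?mulr_ge0 ?ler0n ?sqr_ge0.
  apply: (@le_trans _ _ (2 * (M ^+ 2 * vn) * (#|G|%:R * gT ^+ 2 + gG ^+ 2))).
    by apply: ler_wpM2r => //; apply: ler_wpM2l.
  apply: ler_wpM2l => //; apply: mulr_ge0 => //; apply: mulr_ge0; [exact: sqr_ge0 | exact: ltW].
have EB2 : \sum_(i in G) e i ^+ 2 <= 2 * S ^+ 2 * (#|G|%:R * gT ^+ 2 + gG ^+ 2) := EB.
have WB2 : \sum_(i in G) w i ^+ 2 <= (1 + nu) * sqnorm PW := WB.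
lra.
Qed.
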